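(* Let $X=\{X_{\mathbf i}\}_{\mathbf i\in\mathbb R^2}$ be a max-stable random field with unit Fréchet margins $F(x)=\exp(-1/x)$, and let $\mathbf A,\mathbf B\subset\mathbb R^2$ be finite nonempty sets. Then the limits below exist and $$CI(\mathbf A,\mathbf B)=\sum_{\mathbf j\in\mathbf A}\frac{\sum_{\emptyset\ne\mathbf J\subseteq\mathbf B}(-1)^{|\mathbf J|+1}\lambda_{\mathbf J,\{\mathbf j\}}}{\epsilon_{\mathbf B}},$$ where $$CI(\mathbf A,\mathbf B)=\lim_{u\uparrow1}E\Big(\sum_{\mathbf j\in\mathbf A}\mathbf 1_{\{F(X_{\mathbf j})>u\}}\ \Big|\ \bigcup_{\mathbf i\in\mathbf B}\{F(X_{\mathbf i})>u\}\Big)$$ and, for finite nonempty $\mathbf J,\mathbf K\subset\mathbb R^2$, $\lambda_{\mathbf J,\mathbf K}=\lim_{u\uparrow1}P\big(\bigcap_{\mathbf j\in\mathbf J}\{F(X_{\mathbf j})>u\}\ \big|\ \bigcap_{\mathbf k\in\mathbf K}\{F(X_{\mathbf k})>u\}\big)$.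
   Context: A random field $X=\{X_{\mathbf i}\}_{\mathbf i\in\mathbb R^2}$ is max-stable with unit Fréchet margins if every $X_{\mathbf i}$ has distribution function $F(x)=\exp(-1/x)$, $x>0$, and for every finite set $\mathbf B=\{\mathbf i_1,\dots,\mathbf i_k\}\subset\mathbb R^2$ the joint distribution is a multivariate extreme value distribution $P(X_{\mathbf i_1}\le x_1,\dots,X_{\mathbf i_k}\le x_k)=\exp(-V_{\mathbf B}(x_1,\dots,x_k))$, $x_j>0$, where the exponent function $V_{\mathbf B}$ is homogeneous of order $-1$. The extremal coefficient of $\mathbf B$ is $\epsilon_{\mathbf B}=V_{\mathbf B}(1,\dots,1)$, so that $P(X_{\mathbf k}\le x\ \forall \mathbf k\in\mathbf B)=\exp(-\epsilon_{\mathbf B}/x)$ for $x>0$. *)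

(* Defs.v *)
From Stdlib Require Import Reals List.
Import ListNotations.
Open Scope R_scope.

Definition pt : Type := (R * R)%type.

Record ProbSpace := {
  Omega : Type;
  meas : (Omega -> Prop) -> Prop;
  Pr : (Omega -> Prop) -> R;
  meas_full : meas (fun _ => True);
  meas_compl : forall A, meas A -> meas (fun w => ~ A w);
  meas_cunion : forall A : nat -> Omega -> Prop,
      (forall n, meas (A n)) -> meas (fun w => exists n, A n w);
  Pr_nonneg : forall A, meas A -> 0 <= Pr A;
  Pr_full : Pr (fun _ => True) = 1;
  Pr_sigma : forall A : nat -> Omega -> Prop,
      (forall n, meas (A n)) ->
      (forall m n, m <> n -> forall w, A m w -> A n w -> False) ->
      infinite_sum (fun n => Pr (A n)) (Pr (fun w => exists n, A n w))
}.

Definition Fr (x : R) : R := if Rle_dec x 0 then 0 else exp (- / x).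

(* X is a max-stable random field on R^2 with unit Frechet margins, with
   exponent functions V B (for finite nonempty B, given as a duplicate-free
   list), each homogeneous of order -1. *)
Definition max_stable_unit_frechet (S : ProbSpace) (X : pt -> Omega S -> R)
    (V : list pt -> (pt -> R) -> R) : Prop :=
  (forall i x, meas S (fun w => X i w <= x)) /\
  (forall i x, Pr S (fun w => X i w <= x) = Fr x) /\
  (forall B : list pt, B <> nil -> NoDup B ->
     forall x : pt -> R, (forall i, In i B -> 0 < x i) ->
       Pr S (fun w => forall i, In i B -> X i w <= x i) = exp (- V B x)) /\
  (forall B : list pt, B <> nil -> NoDup B ->
     forall (x : pt -> R) (c : R), (forall i, In i B -> 0 < x i) -> 0 < c ->
       V B (fun i => c * x i) = / c * V B x).

Definition ext_coef (V : list pt -> (pt -> R) -> R) (B : list pt) : R :=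
  V B (fun _ => 1).

Definition exc (S : ProbSpace) (X : pt -> Omega S -> R) (u : R) (i : pt) :
  Omega S -> Prop := fun w => Fr (X i w) > u.

Definition cprob (S : ProbSpace) (E C : Omega S -> Prop) : R :=
  Pr S (fun w => E w /\ C w) / Pr S C.

Definition lambda_u (S : ProbSpace) (X : pt -> Omega S -> R)
    (J K : list pt) (u : R) : R :=
  cprob S (fun w => forall j, In j J -> exc S X u j w)
          (fun w => forall k, In k K -> exc S X u k w).

Definition Rsum_list {A : Type} (f : A -> R) (l : list A) : R :=
  fold_right Rplus 0 (map f l).

(* E( sum_{j in A} 1{F(X_j)>u} | cup_{i in B} {F(X_i)>u} ), the conditional
   expectation of a simple random variable given an event, written out as
   sum_j P({F(X_j)>u} /\ U) / P(U). *)
Definition CI_u (S : ProbSpace) (X : pt -> Omega S -> R)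
    (A B : list pt) (u : R) : R :=
  Rsum_list (fun j => cprob S (exc S X u j)
                          (fun w => exists i, In i B /\ exc S X u i w)) A.

(* All sublists (= subsets, when l has no duplicates). *)
Fixpoint sublists {A : Type} (l : list A) : list (list A) :=
  match l with
  | nil => [nil]
  | x :: t => sublists t ++ map (cons x) (sublists t)
  end.

Definition lim_left1 (f : R -> R) (l : R) : Prop :=
  forall e, 0 < e -> exists d, 0 < d /\
    forall u, 1 - d < u < 1 -> Rabs (f u - l) < e.

(* Main.v *)
Require Import Defs.
From Stdlib Require Import Reals List Lra Lia Classical FunctionalExtensionality PropExtensionality.
Import ListNotations.
Open Scope R_scope.

Lemma Pr_ext (S : ProbSpace) (P Q : Omega S -> Prop) :
  (forall w, P w <-> Q w) -> Pr S P = Pr S Q.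
Proof.
  intro H. replace Q with P; [reflexivity|].
  apply functional_extensionality; intro w; apply propositional_extensionality; auto.
Qed.

Lemma meas_ext (S : ProbSpace) (P Q : Omega S -> Prop) :
  (forall w, P w <-> Q w) -> meas S P -> meas S Q.
Proof.
  intros H HP. replace Q with P; [exact HP|].
  apply functional_extensionality; intro w; apply propositional_extensionality; auto.
Qed.

Lemma meas_empty (S : ProbSpace) : meas S (fun _ => False).
Proof.
  apply (meas_ext S (fun w => ~ True)). { intros; tauto. }
  apply meas_compl, meas_full.
Qed.

Lemma meas_or (S : ProbSpace) (P Q : Omega S -> Prop) :
  meas S P -> meas S Q -> meas S (fun w => P w \/ Q w).
Proof.
  intros HP HQ.
  apply (meas_ext S (fun w => exists n, (match n with O => P | _ => Q end) w)).
  { intro w; split.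
    - intros [[|n] Hn]; auto.
    - intros [H|H]; [exists O|exists 1%nat]; auto. }
  apply meas_cunion. intros [|n]; auto.
Qed.

Lemma meas_not (S : ProbSpace) (P : Omega S -> Prop) :
  meas S P -> meas S (fun w => ~ P w).
Proof. apply meas_compl. Qed.

Lemma meas_and (S : ProbSpace) (P Q : Omega S -> Prop) :
  meas S P -> meas S Q -> meas S (fun w => P w /\ Q w).
Proof.
  intros HP HQ.
  apply (meas_ext S (fun w => ~ (~ P w \/ ~ Q w))).
  { intro w; tauto. }
  apply meas_not, meas_or; apply meas_not; auto.
Qed.

Lemma meas_forall_list (S : ProbSpace) {T : Type} (G : T -> Omega S -> Prop) (L : list T) :
  (forall i, meas S (G i)) -> meas S (fun w => forall i, In i L -> G i w).
Proof.
  intro HG. induction L as [|x t IH].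
  - apply (meas_ext S (fun _ => True)). { intros; simpl; tauto. } apply meas_full.
  - apply (meas_ext S (fun w => G x w /\ forall i, In i t -> G i w)).
    { intro w; simpl; split.
      - intros [H1 H2] i [<-|Hi]; auto.
      - intro H; split; auto. }
    apply meas_and; auto.
Qed.

Lemma meas_exists_list (S : ProbSpace) {T : Type} (G : T -> Omega S -> Prop) (L : list T) :
  (forall i, meas S (G i)) -> meas S (fun w => exists i, In i L /\ G i w).
Proof.
  intro HG.
  apply (meas_ext S (fun w => ~ forall i, In i L -> ~ G i w)).
  { intro w; split.
    - intro H. apply NNPP; intro H'. apply H; intros i Hi Hg; apply H'; eauto.
    - intros [i [Hi Hg]] H; exact (H i Hi Hg). }
  apply meas_not, meas_forall_list; intro i; apply meas_not; auto.
Qed.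

Lemma sum_const_R0 (c : R) (n : nat) : sum_f_R0 (fun _ => c) n = INR (S n) * c.
Proof.
  induction n; simpl sum_f_R0. - simpl; ring.
  - rewrite IHn. rewrite (S_INR (S n)). ring.
Qed.

Lemma Pr_empty (S : ProbSpace) : Pr S (fun _ => False) = 0.
Proof.
  pose proof (Pr_sigma S (fun _ => fun _ => False) (fun _ => meas_empty S)
     (fun m n _ w H _ => H)) as H. cbv beta in H.
  rewrite (Pr_ext S (fun w => exists _ : nat, False) (fun _ => False)) in H
    by (intros; split; [intros [_ []]|tauto]).
  set (c := Pr S (fun _ => False)) in *.
  assert (Hc : 0 <= c) by apply Pr_nonneg, meas_empty.
  destruct (Rle_lt_or_eq_dec _ _ Hc) as [Hlt|]; [|auto].
  exfalso. destruct (H c Hlt) as [N HN].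
  specialize (HN (Datatypes.S N) ltac:(lia)).
  rewrite sum_const_R0 in HN. unfold R_dist in HN.
  rewrite (S_INR (Datatypes.S N)) in HN.
  assert (1 <= INR (Datatypes.S N)) by (rewrite S_INR; pose proof (pos_INR N); lra).
  rewrite Rabs_right in HN by nra. nra.
Qed.

Lemma Pr_add2 (S : ProbSpace) (P Q : Omega S -> Prop) :
  meas S P -> meas S Q -> (forall w, P w -> Q w -> False) ->
  Pr S (fun w => P w \/ Q w) = Pr S P + Pr S Q.
Proof.
  intros HP HQ Hd.
  set (A := fun n : nat => match n with O => P | 1%nat => Q | _ => fun _ => False end).
  assert (HA : forall n, meas S (A n)) by (intros [|[|n]]; simpl; auto using meas_empty).
  assert (Hdis : forall m n, m <> n -> forall w, A m w -> A n w -> False).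
  { intros [|[|m]] [|[|n]] Hmn w; simpl; try tauto; try lia; eauto. }
  pose proof (Pr_sigma S A HA Hdis) as H.
  rewrite (Pr_ext S (fun w => exists n, A n w) (fun w => P w \/ Q w)) in H.
  2:{ intro w; split.
      - intros [[|[|n]] Hn]; simpl in Hn; tauto.
      - intros [H1|H1]; [exists O|exists 1%nat]; exact H1. }
  apply (uniqueness_sum _ _ _ H).
  intros eps Heps. exists 1%nat. intros n Hn.
  assert (E : sum_f_R0 (fun n => Pr S (A n)) n = Pr S P + Pr S Q).
  { induction n as [|n IH]; [lia|].
    destruct n as [|n]; [simpl; reflexivity|].
    simpl sum_f_R0. simpl sum_f_R0 in IH. rewrite IH by lia.
    simpl. rewrite Pr_empty. ring. }
  rewrite E. unfold R_dist. rewrite Rminus_diag, Rabs_R0. lra.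
Qed.

Lemma Pr_split (S : ProbSpace) (E F : Omega S -> Prop) :
  meas S E -> meas S F ->
  Pr S E = Pr S (fun w => E w /\ F w) + Pr S (fun w => E w /\ ~ F w).
Proof.
  intros HE HF. rewrite <- Pr_add2.
  - apply Pr_ext. intro w; tauto.
  - apply meas_and; auto.
  - apply meas_and; auto using meas_not.
  - intros w; tauto.
Qed.

Lemma Pr_compl (S : ProbSpace) (E : Omega S -> Prop) :
  meas S E -> Pr S (fun w => ~ E w) = 1 - Pr S E.
Proof.
  intro HE. rewrite <- (Pr_full S).
  rewrite (Pr_split S (fun _ => True) E) by auto using meas_full.
  rewrite (Pr_ext S (fun w => True /\ E w) E) by tauto.
  rewrite (Pr_ext S (fun w => True /\ ~ E w) (fun w => ~ E w)) by tauto. ring.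
Qed.

Lemma Rsum_nil {T} (f : T -> R) : Rsum_list f [] = 0.
Proof. reflexivity. Qed.
Lemma Rsum_cons {T} (f : T -> R) x l : Rsum_list f (x :: l) = f x + Rsum_list f l.
Proof. reflexivity. Qed.
Lemma Rsum_app {T} (f : T -> R) l1 l2 : Rsum_list f (l1 ++ l2) = Rsum_list f l1 + Rsum_list f l2.
Proof. induction l1; simpl; rewrite ?Rsum_cons, ?Rsum_nil; [ring|]. unfold Rsum_list in *; simpl; rewrite IHl1; ring. Qed.
Lemma Rsum_map {T U} (f : U -> R) (g : T -> U) l : Rsum_list f (map g l) = Rsum_list (fun x => f (g x)) l.
Proof. unfold Rsum_list; rewrite map_map; reflexivity. Qed.
Lemma Rsum_ext_in {T} (f g : T -> R) l : (forall x, In x l -> f x = g x) -> Rsum_list f l = Rsum_list g l.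
Proof. induction l; intro H; [reflexivity|]. rewrite !Rsum_cons. f_equal.
  - apply H; simpl; auto.
  - apply IHl; intros; apply H; simpl; auto. Qed.
Lemma Rsum_opp {T} (f : T -> R) l : Rsum_list (fun x => - f x) l = - Rsum_list f l.
Proof. induction l; [simpl; unfold Rsum_list; simpl; ring|]. rewrite !Rsum_cons, IHl; ring. Qed.
Lemma Rsum_minus {T} (f g : T -> R) l : Rsum_list (fun x => f x - g x) l = Rsum_list f l - Rsum_list g l.
Proof. induction l; [unfold Rsum_list; simpl; ring|]. rewrite !Rsum_cons, IHl; ring. Qed.
Lemma Rsum_mult_r {T} (f : T -> R) k l : Rsum_list (fun x => f x * k) l = Rsum_list f l * k.
Proof. induction l; [unfold Rsum_list; simpl; ring|]. rewrite !Rsum_cons, IHl; ring. Qed.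

Lemma sum_sublists_nil {T} (f : list T -> R) L :
  Rsum_list f (sublists L) = f [] + Rsum_list (fun J => match J with [] => 0 | _ => f J end) (sublists L).
Proof.
  induction L as [|x t IH]; simpl.
  - unfold Rsum_list; simpl; ring.
  - rewrite !Rsum_app, !Rsum_map, IH. ring.
Qed.

Lemma sublists_incl {T} (K L : list T) : In L (sublists K) -> incl L K.
Proof.
  revert L; induction K as [|x t IH]; simpl; intros L H.
  - destruct H as [<-|[]]. intros a [].
  - apply in_app_or in H. destruct H as [H|H].
    + intros a Ha; right; apply (IH L H a Ha).
    + apply in_map_iff in H. destruct H as [L' [<- HL']].
      intros a [<-|Ha]; [left; auto|right; apply (IH L' HL' a Ha)].
Qed.

Lemma sublists_nodup {T} (K L : list T) : In L (sublists K) -> NoDup K -> NoDup L.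
Proof.
  revert L; induction K as [|x t IH]; simpl; intros L H HK.
  - destruct H as [<-|[]]; constructor.
  - inversion HK as [|? ? Hnx Ht]; subst. apply in_app_or in H. destruct H as [H|H]; [eauto|].
    apply in_map_iff in H. destruct H as [L' [<- HL']].
    constructor; [|eauto]. intro Hx; apply Hnx; exact (sublists_incl t L' HL' x Hx).
Qed.

Lemma sum_sign0 {T} (K : list T) (c : list T -> R) : K <> [] ->
  Rsum_list (fun L => (-1) ^ length L * c L) (sublists K) =
  Rsum_list (fun L => (-1) ^ length L * (c L - 1)) (sublists K).
Proof.
  intro HK. destruct K as [|x t]; [congruence|].
  enough (E : Rsum_list (fun L => (-1) ^ length L) (sublists (x :: t)) = 0).
  { rewrite (Rsum_ext_in (fun L => (-1) ^ length L * c L)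
      (fun L => (-1) ^ length L * (c L - 1) - - (-1) ^ length L)) by (intros; ring).
    rewrite Rsum_minus, Rsum_opp, E. ring. }
  simpl. rewrite Rsum_app, Rsum_map. simpl.
  rewrite (Rsum_ext_in (fun x0 => (-1) * (-1) ^ length x0) (fun x0 => - (-1) ^ length x0)) by (intros; ring).
  rewrite Rsum_opp. ring.
Qed.

Lemma IE (S : ProbSpace) {T} (F : T -> Omega S -> Prop) (HF : forall i, meas S (F i)) :
  forall L E, meas S E ->
  Rsum_list (fun J => (-1) ^ length J * Pr S (fun w => E w /\ forall j, In j J -> F j w)) (sublists L)
  = Pr S (fun w => E w /\ forall j, In j L -> ~ F j w).
Proof.
  induction L as [|x t IH]; intros E HE.
  - simpl. unfold Rsum_list; simpl.
    rewrite (Pr_ext S (fun w => E w /\ (forall j, False -> F j w)) (fun w => E w /\ (forall j, False -> ~ F j w))) by (intro w; simpl; firstorder).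
    ring.
  - simpl sublists. rewrite Rsum_app, Rsum_map.
    rewrite (Rsum_ext_in (fun J => (-1) ^ length (x :: J) * Pr S (fun w => E w /\ forall j, In j (x :: J) -> F j w)) (fun J => - ((-1) ^ length J *
        Pr S (fun w => (E w /\ F x w) /\ forall j, In j J -> F j w)))).
    2:{ intros J _. simpl length. rewrite (Pr_ext S _ (fun w => (E w /\ F x w) /\ forall j, In j J -> F j w)).
        - simpl; ring.
        - intro w; simpl; firstorder congruence. }
    rewrite Rsum_opp, IH, IH by (auto using meas_and).
    rewrite (Pr_split S (fun w => E w /\ forall j, In j t -> ~ F j w) (F x)).
    2: apply meas_and; auto; apply meas_forall_list; intro; apply meas_not; auto.
    2: auto.
    rewrite (Pr_ext S (fun w => (E w /\ (forall j, In j t -> ~ F j w)) /\ F x w)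
                      (fun w => (E w /\ F x w) /\ (forall j, In j t -> ~ F j w))) by (intro; tauto).
    rewrite (Pr_ext S (fun w => (E w /\ (forall j, In j t -> ~ F j w)) /\ ~ F x w)
                      (fun w => E w /\ (forall j, In j (x :: t) -> ~ F j w))).
    + ring.
    + intro w; simpl; firstorder congruence.
Qed.

Lemma IE2 (S : ProbSpace) {T} (F : T -> Omega S -> Prop) (HF : forall i, meas S (F i)) L E :
  meas S E ->
  Pr S (fun w => E w /\ exists i, In i L /\ F i w) =
  Rsum_list (fun J => match J with [] => 0 | _ =>
     (-1) ^ (length J + 1) * Pr S (fun w => E w /\ forall j, In j J -> F j w) end) (sublists L).
Proof.
  intro HE.
  pose proof (IE S F HF L E HE) as H.
  rewrite sum_sublists_nil in H. simpl in H.
  rewrite (Pr_ext S (fun w => E w /\ (forall j, False -> F j w)) E) in H by firstorder.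
  rewrite (Pr_ext S (fun w => E w /\ (forall j, In j L -> ~ F j w))
     (fun w => E w /\ ~ (exists i, In i L /\ F i w))) in H by firstorder.
  rewrite (Pr_split S E (fun w => exists i, In i L /\ F i w)) in H by auto using meas_exists_list.
  rewrite (Rsum_ext_in _ (fun J => - match J with [] => 0 | _ =>
     (-1) ^ length J * Pr S (fun w => E w /\ forall j, In j J -> F j w) end)).
  - rewrite Rsum_opp. lra.
  - intros [|a J] _; [ring|]. rewrite pow_add. ring.
Qed.

Lemma lim_ext_D (f g : R -> R) D l x0 :
  (forall x, D x -> f x = g x) -> limit1_in g D l x0 -> limit1_in f D l x0.
Proof.
  intros H Hg eps Heps. destruct (Hg eps Heps) as [alp [Ha Hb]].
  exists alp; split; auto. intros x [Dx Hx]. rewrite H by auto. apply Hb; auto.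
Qed.

Lemma lim_val (f : R -> R) D l l' x0 : limit1_in f D l x0 -> l = l' -> limit1_in f D l' x0.
Proof. intros H <-; exact H. Qed.

Lemma lim_const (c : R) D x0 : limit1_in (fun _ => c) D c x0.
Proof. exact (limit_free (fun _ => c) D c x0). Qed.

Lemma lim_Rsum {T} (l : list T) (f : T -> R -> R) (g : T -> R) D x0 :
  (forall x, In x l -> limit1_in (f x) D (g x) x0) ->
  limit1_in (fun u => Rsum_list (fun x => f x u) l) D (Rsum_list g l) x0.
Proof.
  induction l as [|a l IH]; intro H.
  - exact (lim_const 0 D x0).
  - apply (limit_plus (f a) (fun u => Rsum_list (fun x => f x u) l)).
    + apply H; simpl; auto.
    + apply IH; intros; apply H; simpl; auto.
Qed.

Lemma phi_lim (c : R) :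
  limit1_in (fun s => (1 - exp (- (s * c))) / s) (fun s => 0 < s) c 0.
Proof.
  destruct (Req_dec c 0) as [Hc|Hc].
  - subst c. apply (lim_ext_D _ (fun _ => 0)); [|apply lim_const].
    intros s Hs. rewrite Rmult_0_r, Ropp_0, exp_0. field. lra.
  - intros eps Heps.
    assert (Hca : 0 < Rabs c) by (apply Rabs_pos_lt; auto).
    destruct (derivable_pt_lim_exp_0 (eps / Rabs c) ltac:(apply Rdiv_lt_0_compat; auto)) as [delta Hd].
    exists (delta / Rabs c). split. { apply Rdiv_lt_0_compat; auto. apply cond_pos. }
    intros s [Hs Hsd]. simpl in *. unfold R_dist in *.
    rewrite Rminus_0_r, Rabs_right in Hsd by lra.
    set (h := - (s * c)).
    assert (Hh0 : h <> 0). { unfold h. intro E. apply Hc. nra. }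
    assert (Hhd : Rabs h < delta).
    { unfold h. rewrite Rabs_Ropp, Rabs_mult, (Rabs_right s) by lra.
      apply (Rmult_lt_compat_r (Rabs c)) in Hsd; auto.
      unfold Rdiv in Hsd. rewrite Rmult_assoc, Rinv_l, Rmult_1_r in Hsd; lra. }
    specialize (Hd h Hh0 Hhd). rewrite Rplus_0_l, exp_0 in Hd.
    replace ((1 - exp h) / s - c) with (c * ((exp h - 1) / h - 1)).
    2:{ unfold h. field. split; auto; lra. }
    rewrite Rabs_mult. apply (Rmult_lt_compat_l (Rabs c)) in Hd; auto.
    unfold Rdiv at 2 in Hd. rewrite <- Rmult_assoc, (Rmult_comm (Rabs c) eps), Rmult_assoc, Rinv_r, Rmult_1_r in Hd; lra.
Qed.

Lemma to_u (g : R -> R) L :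
  limit1_in g (fun s => 0 < s) L 0 ->
  limit1_in (fun u => g (- ln u)) (fun u => u < 1) L 1.
Proof.
  intros Hg eps Heps. destruct (Hg eps Heps) as [alp [Ha Hb]].
  assert (He : exp (- alp) < 1) by (rewrite <- exp_0; apply exp_increasing; lra).
  assert (He0 : 0 < exp (- alp)) by apply exp_pos.
  exists (Rmin 1 (1 - exp (- alp))). split. { apply Rmin_glb_lt; lra. }
  intros u [Hu Hd]. simpl in *. unfold R_dist in *.
  pose proof (Rmin_r 1 (1 - exp (- alp))).
  rewrite Rabs_left in Hd by lra.
  assert (Hu0 : exp (- alp) < u) by lra.
  assert (H1 : ln u < 0) by (rewrite <- ln_1; apply ln_increasing; lra).
  assert (H2 : - alp < ln u) by (rewrite <- (ln_exp (- alp)); apply ln_increasing; lra).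
  apply Hb. split; [lra|]. rewrite Rminus_0_r, Rabs_right; lra.
Qed.

Lemma ev_eq (f g : R -> R) L :
  (forall u, 0 < u < 1 -> f u = g u) ->
  limit1_in g (fun u => u < 1) L 1 -> limit1_in f (fun u => u < 1) L 1.
Proof.
  intros H Hg eps Heps. destruct (Hg eps Heps) as [alp [Ha Hb]].
  exists (Rmin alp 1). split. { apply Rmin_glb_lt; lra. }
  intros u [Hu Hd]. simpl in *. unfold R_dist in *.
  pose proof (Rmin_r alp 1). pose proof (Rmin_l alp 1).
  rewrite Rabs_left in Hd by lra.
  rewrite H by lra. apply Hb. split; auto. simpl; unfold R_dist. rewrite Rabs_left; lra.
Qed.

Lemma to_left (f : R -> R) l : limit1_in f (fun u => u < 1) l 1 -> lim_left1 f l.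
Proof.
  intros H e He. destruct (H e He) as [alp [Ha Hb]]. exists alp; split; auto.
  intros u Hu. apply Hb. split; [lra|]. simpl; unfold R_dist. rewrite Rabs_left; lra.
Qed.

Lemma hK_lim {T} (K : list T) (c : list T -> R) : K <> [] ->
  limit1_in (fun s => Rsum_list (fun L => (-1) ^ length L * exp (- (s * c L))) (sublists K) / (1 - exp (- s)))
    (fun s => 0 < s) (Rsum_list (fun L => (-1) ^ (length L + 1) * c L) (sublists K)) 0.
Proof.
  intro HK.
  apply (lim_ext_D _ (fun s => Rsum_list (fun L => (-1) ^ (length L + 1) * ((1 - exp (- (s * c L))) / s)) (sublists K)
                       * / ((1 - exp (- (s * 1))) / s))).
  - intros s Hs. rewrite sum_sign0 by auto.
    rewrite (Rsum_ext_in (fun L => (-1) ^ (length L + 1) * ((1 - exp (- (s * c L))) / s))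
               (fun L => (-1) ^ length L * (exp (- (s * c L)) - 1) * / s)).
    2:{ intros; rewrite pow_add. field. lra. }
    rewrite Rsum_mult_r, Rmult_1_r.
    assert (exp (- s) < 1) by (rewrite <- exp_0; apply exp_increasing; lra).
    field. lra.
  - eapply lim_val.
    + apply limit_mul.
      * apply lim_Rsum. intros L _.
        apply (limit_mul (fun _ => (-1) ^ (length L + 1))); [apply lim_const|apply phi_lim].
      * apply limit_inv; [apply phi_lim|lra].
    + rewrite Rinv_1, Rmult_1_r. reflexivity.
Qed.

Definition pt_dec (x y : pt) : {x = y} + {x <> y}.
Proof.
  destruct x as [a b], y as [c d].
  destruct (Req_dec_T a c) as [->|H1]; [|right; congruence].
  destruct (Req_dec_T b d) as [->|H2]; [left; reflexivity|right; congruence].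
Defined.

Definition cc (V : list pt -> (pt -> R) -> R) (L : list pt) : R :=
  match L with [] => 0 | _ => ext_coef V L end.

Lemma exc_iff (S : ProbSpace) (X : pt -> Omega S -> R) u i w : 0 < u < 1 ->
  (exc S X u i w <-> ~ X i w <= / (- ln u)).
Proof.
  intro Hu. unfold exc, Fr.
  assert (Hl : ln u < 0) by (rewrite <- ln_1; apply ln_increasing; lra).
  set (s := - ln u). assert (Hs : 0 < s) by (unfold s; lra).
  assert (Hst : 0 < / s) by (apply Rinv_0_lt_compat; auto).
  destruct (Rle_dec (X i w) 0) as [Hx|Hx]; [split; intro H; lra|].
  set (x := X i w) in *.
  assert (Hx0 : 0 < x) by lra.
  split; intro H.
  - intro Hle. apply Rgt_lt in H.
    assert (H' : ln u < ln (exp (- / x))) by (apply ln_increasing; lra).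
    rewrite ln_exp in H'.
    assert (/ x < s) by (unfold s; lra).
    pose proof (Rinv_le_contravar _ _ Hx0 Hle) as H2. rewrite Rinv_inv in H2. lra.
  - apply Rnot_le_lt in H.
    apply Rinv_lt_contravar in H; [|nra]. rewrite Rinv_inv in H.
    rewrite <- (exp_ln u) by lra. apply Rlt_gt, exp_increasing. unfold s in H; lra.
Qed.

Lemma meas_exc (S : ProbSpace) (X : pt -> Omega S -> R) V u i :
  max_stable_unit_frechet S X V -> 0 < u < 1 -> meas S (exc S X u i).
Proof.
  intros [Hm _] Hu. apply (meas_ext S (fun w => ~ X i w <= / (- ln u))).
  - intro w; rewrite exc_iff by auto; tauto.
  - apply meas_not, Hm.
Qed.

Lemma allle (S : ProbSpace) (X : pt -> Omega S -> R) V L s :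
  max_stable_unit_frechet S X V -> L <> [] -> NoDup L -> 0 < s ->
  Pr S (fun w => forall i, In i L -> X i w <= / s) = exp (- (s * ext_coef V L)).
Proof.
  intros [_ [_ [HV Hh]]] HL HN Hs.
  assert (Hst : 0 < / s) by (apply Rinv_0_lt_compat; auto).
  rewrite (HV L HL HN (fun _ => / s)) by auto.
  replace (fun _ : pt => / s) with (fun i : pt => / s * (fun _ : pt => 1) i)
    by (apply functional_extensionality; intro; ring).
  rewrite Hh by (auto; intros; lra). rewrite Rinv_inv. reflexivity.
Qed.

Lemma allexc (S : ProbSpace) (X : pt -> Omega S -> R) V K u :
  max_stable_unit_frechet S X V -> K <> [] -> NoDup K -> 0 < u < 1 ->
  Pr S (fun w => forall k, In k K -> exc S X u k w) =
  Rsum_list (fun L => (-1) ^ length L * exp (- ((- ln u) * cc V L))) (sublists K).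
Proof.
  intros HX HK HN Hu.
  assert (Hl : ln u < 0) by (rewrite <- ln_1; apply ln_increasing; lra).
  pose proof HX as [Hm _].
  pose proof (IE S (fun i w => X i w <= / (- ln u)) (fun i => Hm i _) K (fun _ => True) (meas_full S)) as H.
  rewrite (Pr_ext S _ (fun w => forall k, In k K -> exc S X u k w)) in H.
  2:{ intro w. split; [intros [_ H'] k Hk; rewrite exc_iff; auto|].
      intro H'; split; auto; intros k Hk; rewrite <- exc_iff; auto. }
  rewrite <- H. apply Rsum_ext_in. intros L HLin. f_equal.
  destruct L as [|a L'].
  - simpl. rewrite Rmult_0_r, Ropp_0, exp_0, <- (Pr_full S). apply Pr_ext. intro; tauto.
  - rewrite (Pr_ext S _ (fun w => forall i, In i (a :: L') -> X i w <= / (- ln u))) by (intro; tauto).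
    unfold cc. apply allle; auto; [congruence| eapply sublists_nodup; eauto | lra].
Qed.

Lemma Fr1 : Fr 1 = exp (- 1).
Proof. unfold Fr. destruct (Rle_dec 1 0); [lra|]. rewrite Rinv_1; reflexivity. Qed.

Lemma eps1 (S : ProbSpace) (X : pt -> Omega S -> R) V j :
  max_stable_unit_frechet S X V -> ext_coef V [j] = 1.
Proof.
  intro HX. pose proof (allle S X V [j] 1 HX ltac:(congruence) ltac:(repeat constructor; simpl; tauto) Rlt_0_1) as H.
  destruct HX as [_ [HF _]].
  rewrite Rinv_1, (Pr_ext S _ (fun w => X j w <= 1)) in H by (intro; simpl; firstorder congruence).
  rewrite HF, Fr1, Rmult_1_l in H. apply exp_inv in H. lra.
Qed.

Lemma epsB_ge1 (S : ProbSpace) (X : pt -> Omega S -> R) V B :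
  max_stable_unit_frechet S X V -> B <> [] -> NoDup B -> 1 <= ext_coef V B.
Proof.
  intros HX HB HN. destruct B as [|b B']; [congruence|].
  pose proof (allle S X V (b :: B') 1 HX HB HN Rlt_0_1) as H.
  pose proof HX as [Hm [HF _]].
  rewrite Rinv_1, Rmult_1_l in H.
  pose proof (Pr_split S (fun w => X b w <= 1) (fun w => forall i, In i (b :: B') -> X i w <= 1)
     (Hm b 1) (meas_forall_list S _ _ (fun i => Hm i 1))) as H2.
  rewrite HF, Fr1 in H2.
  rewrite (Pr_ext S (fun w => X b w <= 1 /\ (forall i, In i (b :: B') -> X i w <= 1))
                    (fun w => forall i, In i (b :: B') -> X i w <= 1)) in H2
    by (intro w; split; [tauto|intro H'; split; auto; apply H'; simpl; auto]).
  rewrite H in H2.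
  pose proof (Pr_nonneg S (fun w => X b w <= 1 /\ ~ (forall i, In i (b :: B') -> X i w <= 1))
     (meas_and S _ _ (Hm b 1) (meas_not S _ (meas_forall_list S _ _ (fun i => Hm i 1))))).
  destruct (Rle_or_lt 1 (ext_coef V (b :: B'))) as [|Hlt]; auto.
  assert (exp (- 1) < exp (- ext_coef V (b :: B'))) by (apply exp_increasing; lra). lra.
Qed.

Lemma denom (S : ProbSpace) (X : pt -> Omega S -> R) V j u :
  max_stable_unit_frechet S X V -> 0 < u < 1 ->
  Pr S (fun w => forall k, In k [j] -> exc S X u k w) = 1 - exp (- (- ln u)).
Proof.
  intros HX Hu. rewrite (allexc S X V [j] u HX); [|congruence|repeat constructor; simpl; tauto|auto].
  unfold Rsum_list; simpl. unfold cc. rewrite (eps1 S X V j HX).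
  rewrite Rmult_0_r, Ropp_0, exp_0, !Rmult_1_r. ring.
Qed.

Lemma denom_pos u : 0 < u < 1 -> 0 < 1 - exp (- (- ln u)).
Proof.
  intro Hu. assert (Hl : ln u < 0) by (rewrite <- ln_1; apply ln_increasing; lra).
  assert (exp (- - ln u) < 1) by (rewrite <- exp_0; apply exp_increasing; lra). lra.
Qed.

Definition Kof (J : list pt) (j : pt) := nodup pt_dec (j :: J).

Definition hK (V : list pt -> (pt -> R) -> R) (K : list pt) (s : R) :=
  Rsum_list (fun L => (-1) ^ length L * exp (- (s * cc V L))) (sublists K) / (1 - exp (- s)).

Lemma lambda_val (S : ProbSpace) (X : pt -> Omega S -> R) V J j u :
  max_stable_unit_frechet S X V -> 0 < u < 1 ->
  lambda_u S X J [j] u = hK V (Kof J j) (- ln u).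
Proof.
  intros HX Hu. unfold lambda_u, cprob, hK. rewrite (denom S X V j u HX Hu).
  f_equal. rewrite <- (allexc S X V (Kof J j) u HX); auto.
  - apply Pr_ext. intro w. unfold Kof. split.
    + intros [H1 H2] k Hk. apply nodup_In in Hk. destruct Hk as [<-|Hk]; auto. apply H2; simpl; auto.
    + intro H. split; intros k Hk; apply H, nodup_In; simpl in *; tauto.
  - unfold Kof. intro E. assert (Hj : In j (nodup pt_dec (j :: J))) by (apply nodup_In; simpl; auto).
    rewrite E in Hj; exact Hj.
  - apply NoDup_nodup.
Qed.

Lemma lambda_lim (S : ProbSpace) (X : pt -> Omega S -> R) V J j :
  max_stable_unit_frechet S X V ->
  limit1_in (fun u => lambda_u S X J [j] u) (fun u => u < 1)
    (Rsum_list (fun L => (-1) ^ (length L + 1) * cc V L) (sublists (Kof J j))) 1.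
Proof.
  intro HX. apply (ev_eq _ (fun u => hK V (Kof J j) (- ln u))).
  - intros; apply lambda_val; auto.
  - apply (to_u (hK V (Kof J j))). unfold hK. apply hK_lim.
    unfold Kof. intro E. assert (Hj : In j (nodup pt_dec (j :: J))) by (apply nodup_In; simpl; auto).
    rewrite E in Hj; exact Hj.
Qed.

Definition rho (V : list pt -> (pt -> R) -> R) B (s : R) :=
  (1 - exp (- (s * 1))) / s * / ((1 - exp (- (s * ext_coef V B))) / s).

Lemma CI_val (S : ProbSpace) (X : pt -> Omega S -> R) V A B u :
  max_stable_unit_frechet S X V -> B <> [] -> NoDup B -> 0 < u < 1 ->
  CI_u S X A B u = Rsum_list (fun j => Rsum_list (fun J => match J with [] => 0 | _ =>
       (-1) ^ (length J + 1) * lambda_u S X J [j] u end) (sublists B) * rho V B (- ln u)) A.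
Proof.
  intros HX HB HN Hu. unfold CI_u. apply Rsum_ext_in. intros j _. unfold cprob, rho.
  assert (Hl : ln u < 0) by (rewrite <- ln_1; apply ln_increasing; lra).
  pose proof (epsB_ge1 S X V B HX HB HN) as He.
  pose proof (denom_pos u Hu) as Hd.
  assert (Hd2 : 0 < 1 - exp (- (- ln u * ext_coef V B))).
  { assert (exp (- (- ln u * ext_coef V B)) < 1) by (rewrite <- exp_0; apply exp_increasing; nra). lra. }
  assert (HU : Pr S (fun w => exists i, In i B /\ exc S X u i w) = 1 - exp (- (- ln u * ext_coef V B))).
  { rewrite <- (allle S X V B (- ln u) HX HB HN) by lra.
    pose proof (Pr_compl S (fun w => exists i, In i B /\ exc S X u i w)
      ltac:(apply meas_exists_list; intro; apply (meas_exc S X V); auto)) as Hc.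
    enough (Pr S (fun w => ~ (exists i, In i B /\ exc S X u i w)) =
            Pr S (fun w => forall i, In i B -> X i w <= / - ln u)) by lra.
    apply Pr_ext. intro w. split.
    - intros H i Hi. apply NNPP. intro H'. apply H. exists i. split; auto. apply exc_iff; auto.
    - intros H [i [Hi He']]. apply exc_iff in He'; auto. }
  rewrite HU.
  rewrite (IE2 S (exc S X u) (fun i => meas_exc S X V u i HX Hu)) by (apply (meas_exc S X V); auto).
  rewrite (Rsum_ext_in _ (fun J => match J with [] => 0 | _ =>
       (-1) ^ (length J + 1) * lambda_u S X J [j] u end * (1 - exp (- - ln u)))).
  - rewrite Rsum_mult_r. rewrite Rmult_1_r. field. lra.
  - intros [|a J] _; [ring|]. unfold lambda_u, cprob. rewrite (denom S X V j u HX Hu).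
    rewrite (Pr_ext S (fun w => (forall j0, In j0 (a :: J) -> exc S X u j0 w) /\
                               (forall k, In k [j] -> exc S X u k w))
                      (fun w => exc S X u j w /\ (forall j0, In j0 (a :: J) -> exc S X u j0 w))).
    + field. lra.
    + intro w; simpl; firstorder congruence.
Qed.

Lemma rho_lim (S : ProbSpace) (X : pt -> Omega S -> R) V B :
  max_stable_unit_frechet S X V -> B <> [] -> NoDup B ->
  limit1_in (fun u => rho V B (- ln u)) (fun u => u < 1) (/ ext_coef V B) 1.
Proof.
  intros HX HB HN. pose proof (epsB_ge1 S X V B HX HB HN).
  apply (to_u (rho V B)). unfold rho. eapply lim_val.
  - apply limit_mul; [apply phi_lim|]. apply limit_inv; [apply phi_lim|lra].
  - ring.
Qed.

Theorem mainTheorem2 (S : ProbSpace) (X : pt -> Omega S -> R)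
    (V : list pt -> (pt -> R) -> R) (A B : list pt) :
  max_stable_unit_frechet S X V ->
  A <> nil -> NoDup A -> B <> nil -> NoDup B ->
  exists lam : list pt -> pt -> R,
    (forall J j, In J (sublists B) -> J <> nil -> In j A ->
       lim_left1 (fun u => lambda_u S X J [j] u) (lam J j)) /\
    lim_left1 (CI_u S X A B)
      (Rsum_list (fun j =>
          Rsum_list (fun J : list pt => match J with nil => 0 | _ =>
                              (-1) ^ (length J + 1) * lam J j end)
                    (sublists B) / ext_coef V B) A).
Proof.
  intros HX HA HNA HB HNB.
  exists (fun J j => Rsum_list (fun L => (-1) ^ (length L + 1) * cc V L) (sublists (Kof J j))).
  split.
  - intros J j _ _ _. apply to_left, lambda_lim; auto.
  - apply to_left.
    apply (ev_eq _ (fun u => Rsum_list (fun j => Rsum_list (fun J => match J with [] => 0 | _ =>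
       (-1) ^ (length J + 1) * lambda_u S X J [j] u end) (sublists B) * rho V B (- ln u)) A)).
    { intros; apply CI_val; auto. }
    apply (lim_Rsum A (fun j u => Rsum_list (fun J => match J with [] => 0 | _ =>
       (-1) ^ (length J + 1) * lambda_u S X J [j] u end) (sublists B) * rho V B (- ln u))).
    intros j _. unfold Rdiv. apply limit_mul; [|apply (rho_lim S X); auto].
    apply (lim_Rsum (sublists B) (fun J u => match J with [] => 0 | _ =>
       (-1) ^ (length J + 1) * lambda_u S X J [j] u end)).
    intros [|a J] _.
    + apply lim_const.
    + apply (limit_mul (fun _ => (-1) ^ (length (a :: J) + 1))); [apply lim_const|].
      apply lambda_lim; auto.
Qed.
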